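(* Let $\mathcal{C}$ be an $R$-coring, $F:\mathcal{M}^{\mathcal{C}}_R\to\mathcal{M}_R$ the forgetful functor and $G=\bullet\otimes_R\mathcal{C}:\mathcal{M}_R\to\mathcal{M}^{\mathcal{C}}_R$ its right adjoint. 1. Assume $G$ is naturally full. Then: (1) $F$ is naturally full (and conversely, if $F$ is naturally full and there exists $z\in\mathcal{C}$ with $\varepsilon_{\mathcal{C}}(z)=1_R$, then $G$ is naturally full); (2) $\mathcal{C}$ is finitely generated and projective as a left and as a right $R$-module; (3) $F$ is a Frobenius functor. 2. If $F$ is naturally full, then $F$ is separable.
   Context: An $R$-coring is an $R$-bimodule $\mathcal{C}$ with coassociative, counital $R$-bimodule maps $\Delta_{\mathcal{C}}:\mathcal{C}\to\mathcal{C}\otimes_R\mathcal{C}$ and $\varepsilon_{\mathcal{C}}:\mathcal{C}\to R$. $\mathcal{M}^{\mathcal{C}}_R$ is the category of right $\mathcal{C}$-comodules (right $R$-modules with right $R$-linear coassociative counital coaction $M\to M\otimes_R\mathcal{C}$; morphisms colinear $R$-linear maps); $G(N)=N\otimes_R\mathcal{C}$ with coaction $N\otimes_R\Delta_{\mathcal{C}}$. A functor is Frobenius if it has a right adjoint which is also a left adjoint. For a functor $F:\mathcal{A}\to\mathcal{B}$ let $\mathcal{F}_{A,A'}:\mathrm{Hom}_{\mathcal{A}}(A,A')\to\mathrm{Hom}_{\mathcal{B}}(FA,FA')$, $f\mapsto F(f)$; $F$ is separable if $\mathcal{F}$ has a left inverse natural in $A,A'$, and naturally full if $\mathcal{F}$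 has a right inverse natural in $A,A'$. *)

(* Defs.v *)
From HB Require Import structures.
From mathcomp Require Import all_boot all_algebra.
From mathcomp Require Import boolp.
From mathcomp Require Import freeg.
Import GRing.Theory.

Set Implicit Arguments.
Unset Strict Implicit.
Unset Printing Implicit Defensive.

Local Open Scope ring_scope.
Local Open Scope quotient_scope.

Section Gen.
Variable V : zmodType.
Variable rel : V -> Prop.
Definition gensub (x : V) : bool :=
  `[< forall S : {pred V}, GRing.zmod_closed S ->
        (forall y, rel y -> y \in S) -> x \in S >].
Lemma gensub_closed : GRing.zmod_closed (gensub : {pred V}).
Proof.
split.
  by apply/asboolP => S [S0 _] _.
move=> x y /asboolP Hx /asboolP Hy; apply/asboolP => S HS Hr.
by case: HS (HS) => _ HB HS; apply: HB; [apply: Hx | apply: Hy].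
Qed.
End Gen.
HB.instance Definition _ (V : zmodType) (rel : V -> Prop) :=
  GRing.isZmodClosed.Build V (@gensub V rel) (@gensub_closed V rel).

Definition linext (K : choiceType) (A : zmodType) (phi : K -> A)
  (D : {freeg K / int}) : A :=
  \sum_(k <- dom D) phi k *~ coeff k D.

Section Tensor.
Variable R : pzRingType.

Section Def.
Variables (M : zmodType) (am : M -> R -> M) (N : zmodType) (an : R -> N -> N).
Definition tfree : zmodType := {freeg (M * N)%type / int}.
Definition tgen (m : M) (n : N) : tfree := << (m, n) >>.
Definition trel (x : tfree) : Prop :=
  (exists m m' n, x = tgen (m + m') n - tgen m n - tgen m' n)
  \/ (exists m n n', x = tgen m (n + n') - tgen m n - tgen m n')
  \/ (exists m r n, x = tgen (am m r) n - tgen m (an r n)).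
Definition tens : zmodType :=
  Quotient.quot (GRing.ZmodClosed.clone tfree (@gensub tfree trel) _).
Definition tmul (m : M) (n : N) : tens := \pi_tens (tgen m n).
(* the additive map  tens -> A  induced by a (balanced, biadditive) phi,
   i.e. m (x) n |-> phi m n *)
Definition tlift (A : zmodType) (phi : M -> N -> A) (t : tens) : A :=
  linext (fun k => phi k.1 k.2) (repr t).
End Def.

Definition tfun (M : zmodType) (am : M -> R -> M) (N : zmodType) (an : R -> N -> N)
  (M' : zmodType) (am' : M' -> R -> M') (N' : zmodType) (an' : R -> N' -> N')
  (f : M -> M') (g : N -> N') (t : tens am an) : tens am' an' :=
  tlift (fun m n => tmul am' an' (f m) (g n)) t.
End Tensor.
Arguments tens {R M} am {N} an.
Arguments tmul {R M} am {N} an m n.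
Arguments tlift {R M am N an A} phi t.
Arguments tfun {R M} am {N} an {M'} am' {N'} an' f g t.

Section Modules.
Variable R : pzRingType.

Record rmod := RMod { rcar :> zmodType; ract : rcar -> R -> rcar }.
Record lmod := LMod { lcar :> zmodType; lact : R -> lcar -> lcar }.
Record bimod := BiMod { bcar :> zmodType; blact : R -> bcar -> bcar;
                        bract : bcar -> R -> bcar }.

Definition additive_map (A B : zmodType) (f : A -> B) : Prop :=
  forall x y, f (x + y) = f x + f y.

Definition is_rmod (M : rmod) : Prop :=
  [/\ forall (x y : M) r, ract (x + y) r = ract x r + ract y r,
      forall (x : M) r s, ract x (r + s) = ract x r + ract x s,
      forall (x : M) r s, ract (ract x r) s = ract x (r * s) &
      forall x : M, ract x 1 = x].

Definition is_lmod (M : lmod) : Prop :=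
  [/\ forall r (x y : M), lact r (x + y) = lact r x + lact r y,
      forall r s (x : M), lact (r + s) x = lact r x + lact s x,
      forall r s (x : M), lact r (lact s x) = lact (r * s) x &
      forall x : M, lact 1 x = x].

Definition rmod_of_bimod (B : bimod) : rmod := RMod (@bract B).
Definition lmod_of_bimod (B : bimod) : lmod := LMod (@blact B).

Definition is_bimod (B : bimod) : Prop :=
  [/\ is_lmod (lmod_of_bimod B), is_rmod (rmod_of_bimod B) &
      forall r (x : B) s, bract (blact r x) s = blact r (bract x s)].

Definition rlin (M N : rmod) (f : M -> N) : Prop :=
  additive_map f /\ forall x r, f (ract x r) = ract (f x) r.
Definition llin (M N : lmod) (f : M -> N) : Prop :=
  additive_map f /\ forall r x, f (lact r x) = lact r (f x).

Definition tensRB (M : rmod) (B : bimod) : rmod :=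
  RMod (fun (t : tens (@ract M) (@blact B)) r =>
          tfun (@ract M) (@blact B) (@ract M) (@blact B) id (fun b => bract b r) t).

Definition tensBB (B B' : bimod) : bimod :=
  @BiMod (tens (@bract B) (@blact B'))
    (fun r t => tfun (@bract B) (@blact B') (@bract B) (@blact B') (blact r) id t)
    (fun t r => tfun (@bract B) (@blact B') (@bract B) (@blact B') id (fun b => bract b r) t).

Section Assoc.
Variables (X : zmodType) (ax : X -> R -> X) (Y : bimod) (Z : zmodType)
          (az : R -> Z -> Z).
Definition XY_ract (t : tens ax (@blact Y)) (r : R) : tens ax (@blact Y) :=
  tfun ax (@blact Y) ax (@blact Y) id (fun y => bract y r) t.
Definition YZ_lact (r : R) (t : tens (@bract Y) az) : tens (@bract Y) az :=
  tfun (@bract Y) az (@bract Y) az (blact r) id t.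
Definition tassoc (t : tens XY_ract az) : tens ax YZ_lact :=
  tlift (fun u z => tlift (fun x y => tmul ax YZ_lact x (tmul (@bract Y) az y z)) u) t.
Definition tassoc_inv (t : tens ax YZ_lact) : tens XY_ract az :=
  tlift (fun x v => tlift (fun y z => tmul XY_ract az (tmul ax (@blact Y) x y) z) v) t.
End Assoc.

End Modules.
Arguments tassoc {R X ax Y Z az} t.
Arguments tassoc_inv {R X ax Y Z az} t.

Section Corings.
Variable R : pzRingType.

Record coring := Coring {
  cbim :> bimod R;
  cDelta : cbim -> tensBB cbim cbim;
  ceps : cbim -> R }.

Definition is_coring (C : coring) : Prop :=
  let D := @cDelta C in let e := @ceps C in
  [/\ is_bimod C,
      [/\ additive_map D,
          forall r c, D (blact r c) = blact r (D c) &
          forall c r, D (bract c r) = bract (D c) r],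
      [/\ additive_map e,
          forall r c, e (blact r c) = r * e c &
          forall c r, e (bract c r) = e c * r],
      (* coassociativity: (Delta (x) C) o Delta = (C (x) Delta) o Delta *)
      forall c,
        tassoc (tfun (@bract _ C) (@blact _ C) (@bract _ (tensBB C C)) (@blact _ C) D id (D c))
        = tfun (@bract _ C) (@blact _ C) (@bract _ C) (@blact _ (tensBB C C)) id D (D c) &
      (* counitality: (eps (x) C) o Delta = id = (C (x) eps) o Delta *)
      (forall c, tlift (fun x y => blact (e x) y) (D c) = c) /\
      (forall c, tlift (fun x y => bract x (e y)) (D c) = c)].

Variable C : coring.

Record comod := CoMod {
  cmod :> rmod R;
  coact : cmod -> tensRB cmod C }.

Definition is_comod (M : comod) : Prop :=
  let rho := @coact M in
  [/\ is_rmod M,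
      rlin (M := M) (N := tensRB M C) rho,
      (* coassociativity: (rho (x) C) o rho = (M (x) Delta) o rho *)
      forall m,
        tassoc (tfun (@ract _ M) (@blact _ C) (@ract _ (tensRB M C)) (@blact _ C)
                     rho id (rho m))
        = tfun (@ract _ M) (@blact _ C) (@ract _ M) (@blact _ (tensBB C C))
               id (@cDelta C) (rho m) &
      (* counitality: (M (x) eps) o rho = id  (via M (x)_R R = M) *)
      forall m, tlift (fun x c => ract x (ceps c)) (rho m) = m].

Definition comod_hom (M N : comod) (f : M -> N) : Prop :=
  rlin (M := M) (N := N) f /\
  forall m, coact (f m) =
    tfun (@ract _ M) (@blact _ C) (@ract _ N) (@blact _ C) f id (coact m).

Definition Gobj (N : rmod R) : comod :=
  @CoMod (tensRB N C)
    (fun t => tassoc_inv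
       (tfun (@ract _ N) (@blact _ C) (@ract _ N) (@blact _ (tensBB C C))
             id (@cDelta C) t)).
Definition Gmor (N N' : rmod R) (f : N -> N') : Gobj N -> Gobj N' :=
  tfun (@ract _ N) (@blact _ C) (@ract _ N') (@blact _ C) f id.

(* The forgetful functor F : M^C_R -> M_R is  M |-> cmod M,  f |-> f. *)

Definition F_naturally_full : Prop :=
  exists P : forall M M' : comod, (M -> M') -> (M -> M'),
    (forall M M' : comod, is_comod M -> is_comod M' ->
       forall g : M -> M', rlin (M := M) (N := M') g ->
         comod_hom (P M M' g) /\ P M M' g =1 g) /\
    (forall M0 M M' M'0 : comod,
       is_comod M0 -> is_comod M -> is_comod M' -> is_comod M'0 ->
       forall (f : M0 -> M) (h : M' -> M'0) (g : M -> M'),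
         comod_hom f -> comod_hom h -> rlin (M := M) (N := M') g ->
         P M0 M'0 (h \o g \o f) =1 h \o P M M' g \o f).

Definition F_separable : Prop :=
  exists Q : forall M M' : comod, (M -> M') -> (M -> M'),
    (forall M M' : comod, is_comod M -> is_comod M' ->
       (forall g : M -> M', rlin (M := M) (N := M') g -> comod_hom (Q M M' g)) /\
       (forall f : M -> M', comod_hom f -> Q M M' f =1 f)) /\
    (forall M0 M M' M'0 : comod,
       is_comod M0 -> is_comod M -> is_comod M' -> is_comod M'0 ->
       forall (f : M0 -> M) (h : M' -> M'0) (g : M -> M'),
         comod_hom f -> comod_hom h -> rlin (M := M) (N := M') g ->
         Q M0 M'0 (h \o g \o f) =1 h \o Q M M' g \o f).

Definition G_naturally_full : Prop :=
  exists P : forall N N' : rmod R, (Gobj N -> Gobj N') -> (N -> N'),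
    (forall N N' : rmod R, is_rmod N -> is_rmod N' ->
       forall g : Gobj N -> Gobj N', comod_hom g ->
         rlin (P N N' g) /\ Gmor (P N N' g) =1 g) /\
    (forall N0 N N' N'0 : rmod R,
       is_rmod N0 -> is_rmod N -> is_rmod N' -> is_rmod N'0 ->
       forall (f : N0 -> N) (h : N' -> N'0) (g : Gobj N -> Gobj N'),
         rlin f -> rlin h -> comod_hom g ->
         P N0 N'0 (Gmor h \o g \o Gmor f) =1 h \o P N N' g \o f).

(* H : M_R -> M^C_R is a functor; adjunctions are given by unit/counit
   natural transformations satisfying the triangle identities. *)
Definition F_Frobenius : Prop :=
  exists (Hobj : rmod R -> comod)
         (Hmor : forall N N' : rmod R, (N -> N') -> (Hobj N -> Hobj N')),
    [/\ forall N, is_rmod N -> is_comod (Hobj N),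
        forall (N N' : rmod R) (f : N -> N'), is_rmod N -> is_rmod N' ->
          rlin f -> comod_hom (Hmor N N' f),
        forall N : rmod R, is_rmod N -> Hmor N N id =1 id &
        forall (N1 N2 N3 : rmod R) (f : N1 -> N2) (g : N2 -> N3),
          is_rmod N1 -> is_rmod N2 -> is_rmod N3 -> rlin f -> rlin g ->
          Hmor N1 N3 (g \o f) =1 Hmor N2 N3 g \o Hmor N1 N2 f] /\
    (exists (eta : forall M : comod, M -> Hobj M)
            (eps : forall N : rmod R, Hobj N -> N),
      [/\ forall M : comod, is_comod M -> comod_hom (eta M),
          forall N : rmod R, is_rmod N -> rlin (M := Hobj N) (eps N),
          forall (M M' : comod) (f : M -> M'), is_comod M -> is_comod M' ->
            comod_hom f -> Hmor M M' f \o eta M =1 eta M' \o f,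
          forall (N N' : rmod R) (g : N -> N'), is_rmod N -> is_rmod N' ->
            rlin g -> g \o eps N =1 eps N' \o Hmor N N' g &
          (forall M : comod, is_comod M -> eps M \o eta M =1 id) /\
          (forall N : rmod R, is_rmod N ->
             Hmor (Hobj N) N (eps N) \o eta (Hobj N) =1 id)]) /\
    (exists (eta : forall N : rmod R, N -> Hobj N)
            (eps : forall M : comod, Hobj M -> M),
      [/\ forall N : rmod R, is_rmod N -> rlin (N := Hobj N) (eta N),
          forall M : comod, is_comod M -> comod_hom (eps M),
          forall (N N' : rmod R) (g : N -> N'), is_rmod N -> is_rmod N' ->
            rlin g -> Hmor N N' g \o eta N =1 eta N' \o g,
          forall (M M' : comod) (f : M -> M'), is_comod M -> is_comod M' ->
            comod_hom f -> f \o eps M =1 eps M' \o Hmor M M' f &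
          (forall N : rmod R, is_rmod N ->
             eps (Hobj N) \o Hmor N (Hobj N) (eta N) =1 id) /\
          (forall M : comod, is_comod M -> eps M \o eta M =1 id)]).

End Corings.

Section FGP.
Variable R : pzRingType.

Definition rfin_gen (M : rmod R) : Prop :=
  exists n (x : 'I_n -> M), forall m : M,
    exists r : 'I_n -> R, m = \sum_(i < n) ract (x i) (r i).
Definition rprojective (M : rmod R) : Prop :=
  forall A B : rmod R, is_rmod A -> is_rmod B ->
  forall p : A -> B, rlin p -> (forall b, exists a, p a = b) ->
  forall g : M -> B, rlin g ->
    exists h : M -> A, rlin h /\ forall m, p (h m) = g m.

Definition lfin_gen (M : lmod R) : Prop :=
  exists n (x : 'I_n -> M), forall m : M,
    exists r : 'I_n -> R, m = \sum_(i < n) lact (r i) (x i).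
Definition lprojective (M : lmod R) : Prop :=
  forall A B : lmod R, is_lmod A -> is_lmod B ->
  forall p : A -> B, llin p -> (forall b, exists a, p a = b) ->
  forall g : M -> B, llin g ->
    exists h : M -> A, llin h /\ forall m, p (h m) = g m.
End FGP.

(* Main.v *)
Require Import Defs.
From HB Require Import structures.
From mathcomp Require Import all_boot all_algebra.
From mathcomp Require Import boolp freeg.
Import GRing.Theory.
Set Implicit Arguments.
Unset Strict Implicit.
Unset Printing Implicit Defensive.
Local Open Scope ring_scope.
Local Open Scope quotient_scope.

Section AddMap.
Variables (A B : zmodType) (f : A -> B) (Hf : additive_map f).
Lemma am0 : f 0 = 0.
Proof. by apply/(addrI (f 0)); rewrite -Hf !addr0. Qed.
Lemma amN x : f (- x) = - f x.
Proof. by apply/(addrI (f x)); rewrite -Hf !subrr am0. Qed.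
Lemma amB x y : f (x - y) = f x - f y.
Proof. by rewrite Hf amN. Qed.
Lemma am_sum (I : Type) (s : seq I) (F : I -> A) :
  f (\sum_(i <- s) F i) = \sum_(i <- s) f (F i).
Proof. elim: s => [|a s IH]; rewrite ?big_nil ?am0 // !big_cons Hf IH. by []. Qed.
Lemma am_mulz x (z : int) : f (x *~ z) = f x *~ z.
Proof.
have hn n : f (x *+ n) = f x *+ n.
  by elim: n => [|n IH]; rewrite ?mulr0n ?am0 // !mulrS Hf IH.
case: z => n; first exact: hn.
by rewrite NegzE !mulrNz amN -!pmulrn hn.
Qed.
End AddMap.

Lemma id_add (A : zmodType) : additive_map (@id A).
Proof. by []. Qed.
Lemma comp_add (A B D : zmodType) (f : B -> D) (g : A -> B) :
  additive_map f -> additive_map g -> additive_map (f \o g).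
Proof. by move=> Hf Hg x y /=; rewrite Hg Hf. Qed.

Lemma gensub_rel (V : zmodType) (rel : V -> Prop) y : rel y -> gensub rel y.
Proof. by move=> h; apply/asboolP => S _ H; apply: H. Qed.
Lemma gensub_ind (V : zmodType) (rel : V -> Prop) (S : {pred V}) :
  GRing.zmod_closed S -> (forall y, rel y -> y \in S) ->
  forall x, gensub rel x -> x \in S.
Proof. by move=> HS Hr x /asboolP; apply. Qed.

Section Linext.
Variables (K : choiceType) (A : zmodType) (phi : K -> A).
Lemma linext_uniq (D : {freeg K / int}) (s : seq K) :
  uniq s -> {subset dom D <= s} ->
  linext phi D = \sum_(k <- s) phi k *~ coeff k D.
Proof.
move=> us sub; rewrite /linext [RHS](bigID (mem (dom D))) /=.
rewrite [X in _ = _ + X]big1 ?addr0; last first.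
  by move=> k /negbTE kn; rewrite coeff_outdom ?kn // mulr0z.
rewrite -[RHS]big_filter; apply: perm_big; apply: uniq_perm.
- exact: uniq_dom.
- exact: filter_uniq.
by move=> k; rewrite mem_filter; case kd: (k \in dom D) => //=; rewrite sub.
Qed.
Lemma linextD D1 D2 : linext phi (D1 + D2) = linext phi D1 + linext phi D2.
Proof.
set s := undup (dom D1 ++ dom D2 ++ dom (D1 + D2)).
have us : uniq s by exact: undup_uniq.
have s1 : {subset dom D1 <= s} by move=> k kd; rewrite mem_undup !mem_cat kd.
have s2 : {subset dom D2 <= s} by move=> k kd; rewrite mem_undup !mem_cat kd !orbT.
have s3 : {subset dom (D1 + D2) <= s} by move=> k kd; rewrite mem_undup !mem_cat kd !orbT.
rewrite (linext_uniq us s1) (linext_uniq us s2) (linext_uniq us s3).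
by rewrite -big_split /=; apply: eq_bigr => k _; rewrite coeffD mulrzDr_tmp.
Qed.
Lemma linext0 : linext phi 0 = 0.
Proof. by apply/(addrI (linext phi 0)); rewrite -linextD !addr0. Qed.
Lemma linextN D : linext phi (- D) = - linext phi D.
Proof. by apply/(addrI (linext phi D)); rewrite -linextD !subrr linext0. Qed.
Lemma linextB D1 D2 : linext phi (D1 - D2) = linext phi D1 - linext phi D2.
Proof. by rewrite linextD linextN. Qed.
Lemma linextU k : linext phi << k >> = phi k.
Proof. by rewrite /linext domU1 big_seq1 coeffU eqxx mulr1 mulr1z. Qed.
End Linext.

Section TensLib.
Variables (R : pzRingType) (M : zmodType) (am : M -> R -> M)
          (N : zmodType) (an : R -> N -> N).
Local Notation T := (tens am an).
Local Notation tl := (@tlift R M am N an _).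

Definition good (A : zmodType) (phi : M -> N -> A) : Prop :=
  [/\ forall m m' n, phi (m + m') n = phi m n + phi m' n,
      forall m n n', phi m (n + n') = phi m n + phi m n' &
      forall m r n, phi (am m r) n = phi m (an r n)].

Lemma pi_eq (x y : tfree M N) : gensub (trel am an) (x - y) -> \pi_T x = \pi_T y.
Proof. by move=> h; apply/eqmodP. Qed.

Lemma repr_pi (x : tfree M N) : gensub (trel am an) (repr (\pi_T x) - x).
Proof.
have : \pi_T (repr (\pi_T x)) = \pi_T x by rewrite reprK.
by move/eqmodP.
Qed.

Lemma tmulDl m m' n : tmul am an (m + m') n = tmul am an m n + tmul am an m' n.
Proof.
rewrite /tmul -raddfD; apply: pi_eq; apply: gensub_rel; left.
by exists m, m', n; rewrite opprD addrA.
Qed.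
Lemma tmulDr m n n' : tmul am an m (n + n') = tmul am an m n + tmul am an m n'.
Proof.
rewrite /tmul -raddfD; apply: pi_eq; apply: gensub_rel; right; left.
by exists m, n, n'; rewrite opprD addrA.
Qed.
Lemma tmul_bal m r n : tmul am an (am m r) n = tmul am an m (an r n).
Proof.
rewrite /tmul; apply: pi_eq; apply: gensub_rel; right; right.
by exists m, r, n.
Qed.
Lemma tmul_good : good (tmul am an).
Proof. by split; [exact: tmulDl | exact: tmulDr | exact: tmul_bal]. Qed.
Lemma tmul_addl n : additive_map (fun m => tmul am an m n).
Proof. by move=> x y; rewrite tmulDl. Qed.
Lemma tmul_addr m : additive_map (tmul am an m).
Proof. by move=> x y; rewrite tmulDr. Qed.

Section Phi.
Variables (A : zmodType) (phi : M -> N -> A).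
Local Notation phik := (fun k : M * N => phi k.1 k.2).

Lemma linext_gen : good phi -> forall D, gensub (trel am an) D -> linext phik D = 0.
Proof.
case=> H1 H2 H3.
have cl : GRing.zmod_closed [pred D : tfree M N | linext phik D == 0].
  split; first by rewrite inE linext0.
  by move=> x y; rewrite !inE linextB => /eqP -> /eqP ->; rewrite subrr.
move=> D hD; apply/eqP; move: D hD; apply: (gensub_ind cl) => y.
rewrite inE; case=> [[m [m' [n ->]]]|[[m [n [n' ->]]]|[m [r [n ->]]]]];
  rewrite /tgen !linextB !linextU /= ?H1 ?H2 ?H3 ?subrr //.
all: by rewrite addrAC addrK subrr.
Qed.

Lemma tlift_pi : good phi -> forall D, tl phi (\pi_T D) = linext phik D.
Proof.
move=> g D; rewrite /tlift.
have := linext_gen g (repr_pi D); rewrite linextB => /eqP.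
by rewrite subr_eq0 => /eqP.
Qed.

Lemma tlift_tmul : good phi -> forall m n, tl phi (tmul am an m n) = phi m n.
Proof. by move=> g m n; rewrite /tmul tlift_pi // linextU. Qed.

Lemma tlift_add : good phi -> additive_map (tl phi).
Proof.
move=> g t u; rewrite -[t]reprK -[u]reprK -raddfD !tlift_pi // linextD.
by [].
Qed.

Lemma tlift_eq (psi : M -> N -> A) t : phi =2 psi -> tl phi t = tl psi t.
Proof. by move=> h; rewrite /tlift /linext; apply: eq_bigr => k _; rewrite h. Qed.

Lemma tlift_sumf (psi : M -> N -> A) t :
  tl (fun m n => phi m n + psi m n) t = tl phi t + tl psi t.
Proof.
by rewrite /tlift /linext -big_split; apply: eq_bigr => k _; rewrite mulrzDl_tmp.
Qed.
End Phi.

Lemma tlift_comp_add (A B : zmodType) (Phi : A -> B) (phi : M -> N -> A) t :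
  additive_map Phi -> Phi (tl phi t) = tl (fun m n => Phi (phi m n)) t.
Proof.
move=> h; rewrite /tlift /linext am_sum //; apply: eq_bigr => k _.
by rewrite am_mulz.
Qed.

Lemma tens_repr (A : zmodType) (al : T -> A) : additive_map al ->
  forall t, al t = linext (fun k => al (tmul am an k.1 k.2)) (repr t).
Proof.
move=> h t; rewrite -{1}[t]reprK; set D := repr t.
rewrite -{1}(freeg_sumE D) raddf_sum am_sum // /linext; apply: eq_bigr => k _.
have -> : << coeff k D *g k >> = << k >> *~ coeff k D by rewrite freegU_mulz intz.
by rewrite raddfMz am_mulz //; case: k.
Qed.

Lemma tens_ext (A : zmodType) (al be : T -> A) :
  additive_map al -> additive_map be ->
  (forall m n, al (tmul am an m n) = be (tmul am an m n)) -> al =1 be.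
Proof.
move=> ha hb h t; rewrite (tens_repr ha) (tens_repr hb) /linext.
by apply: eq_bigr => k _; rewrite h.
Qed.
End TensLib.

Section Compat.
Variable R : pzRingType.
Definition rcompat (M M' : zmodType) (am : M -> R -> M) (am' : M' -> R -> M')
  (f : M -> M') := additive_map f /\ forall m r, f (am m r) = am' (f m) r.
Definition lcompat (N N' : zmodType) (an : R -> N -> N) (an' : R -> N' -> N')
  (g : N -> N') := additive_map g /\ forall r n, g (an r n) = an' r (g n).
Lemma rcompat_id (M : zmodType) (am : M -> R -> M) : rcompat am am id.
Proof. by []. Qed.
Lemma lcompat_id (N : zmodType) (an : R -> N -> N) : lcompat an an id.
Proof. by []. Qed.
Lemma rcompat_comp (M M' M'' : zmodType) (am : M -> R -> M) (am' : M' -> R -> M')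
  (am'' : M'' -> R -> M'') f1 f2 :
  rcompat am am' f1 -> rcompat am' am'' f2 -> rcompat am am'' (f2 \o f1).
Proof. by case=> a1 h1 [a2 h2]; split; [exact: comp_add | move=> m r /=; rewrite h1 h2]. Qed.
Lemma lcompat_comp (N N' N'' : zmodType) (an : R -> N -> N) (an' : R -> N' -> N')
  (an'' : R -> N'' -> N'') g1 g2 :
  lcompat an an' g1 -> lcompat an' an'' g2 -> lcompat an an'' (g2 \o g1).
Proof. by case=> a1 h1 [a2 h2]; split; [exact: comp_add | move=> m r /=; rewrite h1 h2]. Qed.
End Compat.

Section TfunLib.
Variables (R : pzRingType) (M : zmodType) (am : M -> R -> M)
          (N : zmodType) (an : R -> N -> N)
          (M' : zmodType) (am' : M' -> R -> M')
          (N' : zmodType) (an' : R -> N' -> N')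
          (f : M -> M') (g : N -> N').
Hypotheses (Hf : rcompat am am' f) (Hg : lcompat an an' g).

Lemma good_comp (A : zmodType) (psi : M' -> N' -> A) :
  good am' an' psi -> good am an (fun m n => psi (f m) (g n)).
Proof.
case: Hf Hg => af hf [ag hg] [h1 h2 h3]; split=> *.
- by rewrite af h1.
- by rewrite ag h2.
by rewrite hf hg h3.
Qed.

Lemma tfun_good : good am an (fun m n => tmul am' an' (f m) (g n)).
Proof. exact: good_comp (tmul_good am' an'). Qed.

Lemma tfun_tmul m n : tfun am an am' an' f g (tmul am an m n) = tmul am' an' (f m) (g n).
Proof. by rewrite /tfun tlift_tmul //; exact: tfun_good. Qed.

Lemma tfun_add : additive_map (tfun am an am' an' f g).
Proof. exact: tlift_add tfun_good. Qed.

Lemma tlift_tfun (A : zmodType) (psi : M' -> N' -> A) t : good am' an' psi ->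
  tlift psi (tfun am an am' an' f g t) = tlift (fun m n => psi (f m) (g n)) t.
Proof.
move=> gp; apply: (tens_ext (al := fun t => tlift psi (tfun am an am' an' f g t))
                           (be := tlift (fun m n => psi (f m) (g n)))).
- exact: comp_add (tlift_add gp) tfun_add.
- exact: tlift_add (good_comp gp).
by move=> m n; rewrite tfun_tmul !tlift_tmul //; exact: good_comp.
Qed.
End TfunLib.

Lemma tfun_id (R : pzRingType) (M : zmodType) (am : M -> R -> M)
  (N : zmodType) (an : R -> N -> N) t : tfun am an am an id id t = t.
Proof.
apply: (tens_ext (al := tfun am an am an id id) (be := id)).
- exact: tfun_add (rcompat_id _) (lcompat_id _).
- by [].
by move=> m n; rewrite tfun_tmul.
Qed.

Lemma tfun_comp (R : pzRingType) (M : zmodType) (am : M -> R -> M)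
  (N : zmodType) (an : R -> N -> N) (M' : zmodType) (am' : M' -> R -> M')
  (N' : zmodType) (an' : R -> N' -> N') (M'' : zmodType) (am'' : M'' -> R -> M'')
  (N'' : zmodType) (an'' : R -> N'' -> N'') f1 g1 f2 g2 t :
  rcompat am am' f1 -> lcompat an an' g1 -> rcompat am' am'' f2 -> lcompat an' an'' g2 ->
  tfun am' an' am'' an'' f2 g2 (tfun am an am' an' f1 g1 t)
  = tfun am an am'' an'' (f2 \o f1) (g2 \o g1) t.
Proof.
move=> h1 h2 h3 h4; rewrite {1}/tfun tlift_tfun //.
exact: tfun_good.
Qed.

Section BimodFacts.
Variables (R : pzRingType) (Y : bimod R).
Hypothesis HY : is_bimod Y.
Lemma bract_lcompat r : lcompat (@blact R Y) (@blact R Y) (fun y => bract y r).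
Proof.
case: HY => _ [h1 _ _ _] lr; split; first by move=> x y; apply: h1.
by move=> s y; rewrite lr.
Qed.
Lemma blact_rcompat r : rcompat (@bract R Y) (@bract R Y) (blact r).
Proof.
case: HY => [[h1 _ _ _] _ lr]; split; first by move=> x y; apply: h1.
by move=> y s; rewrite lr.
Qed.
End BimodFacts.

Section Assoc.
Variables (R : pzRingType) (X : zmodType) (ax : X -> R -> X) (Y : bimod R)
          (Z : zmodType) (az : R -> Z -> Z).
Hypothesis HY : is_bimod Y.
Local Notation XY := (@XY_ract R X ax Y).
Local Notation YZ := (@YZ_lact R Y Z az).

Definition psiA (z : Z) (x : X) (y : Y) := tmul ax YZ x (tmul (@bract R Y) az y z).
Lemma psiA_good z : good ax (@blact R Y) (psiA z).
Proof.
split=> *; rewrite /psiA.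
- by rewrite tmulDl.
- by rewrite tmulDl tmulDr.
by rewrite tmul_bal /YZ_lact tfun_tmul //; apply: blact_rcompat.
Qed.
Definition PhiA (u : tens ax (@blact R Y)) (z : Z) := tlift (psiA z) u.
Lemma PhiA_good : good XY az PhiA.
Proof.
split=> *; rewrite /PhiA.
- by rewrite tlift_add //; exact: psiA_good.
- rewrite -tlift_sumf; apply: tlift_eq => x y.
  by rewrite /psiA tmulDr tmulDr.
rewrite /XY_ract tlift_tfun //; last exact: psiA_good; last exact: bract_lcompat.
by apply: tlift_eq => x y; rewrite /psiA tmul_bal.
Qed.
Lemma tassoc_tmul u z : tassoc (tmul XY az u z) = tlift (psiA z) u.
Proof. by rewrite /tassoc tlift_tmul //; exact: PhiA_good. Qed.
Lemma tassoc_tmul2 x y z :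
  tassoc (tmul XY az (tmul ax (@blact R Y) x y) z)
  = tmul ax YZ x (tmul (@bract R Y) az y z).
Proof. by rewrite tassoc_tmul tlift_tmul //; exact: psiA_good. Qed.
Lemma tassoc_add : additive_map (@tassoc R X ax Y Z az).
Proof. exact: tlift_add PhiA_good. Qed.

Definition psiI (x : X) (y : Y) (z : Z) := tmul XY az (tmul ax (@blact R Y) x y) z.
Lemma psiI_good x : good (@bract R Y) az (psiI x).
Proof.
split=> *; rewrite /psiI.
- by rewrite tmulDr tmulDl.
- by rewrite tmulDr.
by rewrite -tmul_bal /XY_ract tfun_tmul //; apply: bract_lcompat.
Qed.
Definition PhiI (x : X) (v : tens (@bract R Y) az) := tlift (psiI x) v.
Lemma PhiI_good : good ax YZ PhiI.
Proof.
split=> *; rewrite /PhiI.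
- rewrite -tlift_sumf; apply: tlift_eq => y z.
  by rewrite /psiI tmulDl tmulDl.
- by rewrite tlift_add //; exact: psiI_good.
rewrite /YZ_lact tlift_tfun //; last exact: psiI_good; last exact: blact_rcompat.
by apply: tlift_eq => y z; rewrite /psiI tmul_bal.
Qed.
Lemma tassoc_inv_tmul x v : tassoc_inv (tmul ax YZ x v) = tlift (psiI x) v.
Proof. by rewrite /tassoc_inv tlift_tmul //; exact: PhiI_good. Qed.
Lemma tassoc_inv_add : additive_map (@tassoc_inv R X ax Y Z az).
Proof. exact: tlift_add PhiI_good. Qed.

Lemma tassoc_invK (w : tens XY az) : tassoc_inv (tassoc w) = w.
Proof.
apply: (tens_ext (al := fun w => tassoc_inv (tassoc w)) (be := id)).
- exact: comp_add tassoc_inv_add tassoc_add.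
- by [].
move=> u z /=; rewrite tassoc_tmul tlift_comp_add; last exact: tassoc_inv_add.
rewrite (@tlift_eq _ _ _ _ _ _ _ (fun x y => psiI x y z)); last first.
  by move=> x y; rewrite /psiA tassoc_inv_tmul tlift_tmul //; exact: psiI_good.
have g : good ax (@blact R Y) (fun x y => psiI x y z).
  split=> *; rewrite /psiI.
  - by rewrite !tmulDl.
  - by rewrite tmulDr tmulDl.
  by rewrite tmul_bal.
apply: (tens_ext (al := tlift (fun x y => psiI x y z))
                 (be := fun u => tmul XY az u z)).
- exact: tlift_add g.
- exact: tmul_addl.
by move=> x y; rewrite tlift_tmul.
Qed.
End Assoc.



Lemma add_plus (A B : zmodType) (f g : A -> B) :
  additive_map f -> additive_map g -> additive_map (fun x => f x + g x).
Proof. by move=> hf hg x y; rewrite hf hg addrACA. Qed.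

Section Coring.
Variables (R : pzRingType) (C : coring R).
Hypothesis HC : is_coring C.
Local Notation eps := (@ceps R C).
Local Notation D := (@cDelta R C).
Local Notation bl := (@blact R C).
Local Notation br := (@bract R C).
Local Notation RC := (rmod_of_bimod C).

Lemma HB : is_bimod C. Proof. by case: HC. Qed.
Lemma eA : additive_map eps. Proof. by case: HC => _ _ [] . Qed.
Lemma el r c : eps (bl r c) = r * eps c. Proof. by case: HC => _ _ [] . Qed.
Lemma er c r : eps (br c r) = eps c * r. Proof. by case: HC => _ _ [] . Qed.
Lemma DA : additive_map D. Proof. by case: HC => _ [] . Qed.
Lemma Dl r c : D (bl r c) = blact r (D c). Proof. by case: HC => _ [] . Qed.
Lemma Dr c r : D (br c r) = bract (D c) r. Proof. by case: HC => _ [] . Qed.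
Lemma cR c : tlift (fun x y => br x (eps y)) (D c) = c.
Proof. by case: HC => _ _ _ _ []. Qed.
Lemma cL c : tlift (fun x y => bl (eps x) y) (D c) = c.
Proof. by case: HC => _ _ _ _ []. Qed.
Lemma HRC : is_rmod RC. Proof. by case: HB. Qed.
Lemma brDl x y r : br (x + y) r = br x r + br y r.
Proof. by case: HB => _ [h _ _ _] _; apply: h. Qed.
Lemma brDr x r s : br x (r + s) = br x r + br x s.
Proof. by case: HB => _ [_ h _ _] _; apply: h. Qed.
Lemma brM x r s : br (br x r) s = br x (r * s).
Proof. by case: HB => _ [_ _ h _] _; apply: h. Qed.
Lemma br1 x : br x 1 = x.
Proof. by case: HB => _ [_ _ _ h] _; apply: h. Qed.
Lemma blDr r x y : bl r (x + y) = bl r x + bl r y.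
Proof. by case: HB => [[h _ _ _] _ _]; apply: h. Qed.
Lemma blDl r s x : bl (r + s) x = bl r x + bl s x.
Proof. by case: HB => [[_ h _ _] _ _]; apply: h. Qed.
Lemma blM r s x : bl r (bl s x) = bl (r * s) x.
Proof. by case: HB => [[_ _ h _] _ _]; apply: h. Qed.
Lemma bl1 x : bl 1 x = x.
Proof. by case: HB => [[_ _ _ h] _ _]; apply: h. Qed.
Lemma blr r x s : br (bl r x) s = bl r (br x s).
Proof. by case: HB => [_ _ h]; apply: h. Qed.

Definition mu (N : rmod R) : tens (@ract R N) bl -> N :=
  tlift (fun x c => ract x (eps c)).
Arguments mu N : clear implicits.

Section RM.
Variable N : rmod R.
Hypothesis HN : is_rmod N.
Lemma mu_good : good (@ract R N) bl (fun x c => ract x (eps c)).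
Proof.
case: HN => h1 h2 h3 h4; split=> *.
- exact: h1.
- by rewrite eA h2.
by rewrite h3 el.
Qed.
Lemma mu_add : additive_map (mu N).
Proof. exact: tlift_add mu_good. Qed.
Lemma mu_tmul x c : mu N (tmul (@ract R N) bl x c) = ract x (eps c).
Proof. by rewrite /mu tlift_tmul //; exact: mu_good. Qed.

Lemma tensRB_rmod : is_rmod (tensRB N C).
Proof.
have lc r := bract_lcompat HB r.
split.
- by move=> x y r; apply: tfun_add => //; exact: rcompat_id.
- move=> x r s; move: x.
  apply: (tens_ext (al := fun t => ract (r := tensRB N C) t (r + s))
                   (be := fun t => ract (r := tensRB N C) t r + ract (r := tensRB N C) t s)).
  + exact: tfun_add.
  + by apply: add_plus; exact: tfun_add.
  by move=> m n /=; rewrite !tfun_tmul // -tmulDr brDr.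
- move=> x r s; move: x.
  apply: (tens_ext (al := fun t => ract (r := tensRB N C) (ract (r := tensRB N C) t r) s)
                   (be := fun t => ract (r := tensRB N C) t (r * s))).
  + by apply: comp_add; exact: tfun_add.
  + exact: tfun_add.
  by move=> m n /=; rewrite !tfun_tmul // brM.
apply: (tens_ext (al := fun t => ract (r := tensRB N C) t 1) (be := id)).
+ exact: tfun_add.
+ by [].
by move=> m n /=; rewrite !tfun_tmul // br1.
Qed.
Lemma mu_rlin : rlin (M := tensRB N C) (N := N) (mu N).
Proof.
split; first exact: mu_add.
case: HN => h1 h2 h3 h4.
move=> t r; move: t.
apply: (tens_ext (al := fun t => mu N (ract (r := tensRB N C) t r))
                 (be := fun t => ract (mu N t) r)).
- apply: comp_add; first exact: mu_add.
  exact: tfun_add (rcompat_id _) (bract_lcompat HB r).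
- by move=> x y; rewrite mu_add h1.
move=> m n /=; rewrite tfun_tmul //; last exact: bract_lcompat HB r.
by rewrite !mu_tmul er h3.
Qed.
End RM.

Lemma mu_nat (N N' : rmod R) (HN : is_rmod N) (HN' : is_rmod N') (h : N -> N') :
  rlin h -> forall t, h (mu N t) = mu N' (tfun (@ract R N) bl (@ract R N') bl h id t).
Proof.
move=> Hh; apply: (tens_ext (al := fun t => h (mu N t))
   (be := fun t => mu N' (tfun (@ract R N) bl (@ract R N') bl h id t))).
- apply: comp_add; [by case: Hh | exact: mu_add].
- apply: comp_add; first exact: mu_add.
  exact: tfun_add Hh (lcompat_id _).
move=> m n /=; rewrite (tfun_tmul Hh (lcompat_id _)).
by rewrite !mu_tmul //; case: Hh => _ ->.
Qed.

Lemma tfun_rlin (N N' : rmod R) (f : N -> N') : rlin f ->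
  rlin (M := tensRB N C) (N := tensRB N' C) (tfun (@ract R N) bl (@ract R N') bl f id).
Proof.
move=> Hf; split; first exact: tfun_add Hf (lcompat_id _).
move=> t r; move: t.
apply: (tens_ext
  (al := fun t => tfun (@ract R N) bl (@ract R N') bl f id (ract (r := tensRB N C) t r))
  (be := fun t => ract (r := tensRB N' C) (tfun (@ract R N) bl (@ract R N') bl f id t) r)).
- apply: comp_add; first exact: tfun_add Hf (lcompat_id _).
  exact: tfun_add (rcompat_id _) (bract_lcompat HB r).
- apply: comp_add; last exact: tfun_add Hf (lcompat_id _).
  exact: tfun_add (rcompat_id _) (bract_lcompat HB r).
move=> m n /=.
by rewrite !tfun_tmul //; try exact: bract_lcompat HB r; exact: lcompat_id.
Qed.

Section Struct.
Variable e : C.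
Hypothesis He1 : forall c, br e (eps c) = c.
Hypothesis Hc : forall r, bl r e = br e r.
Lemma He2 c : bl (eps c) e = c. Proof. by rewrite Hc He1. Qed.

Lemma tmul_c (N : rmod R) (x : N) c :
  tmul (@ract R N) bl x c = tmul (@ract R N) bl (ract x (eps c)) e.
Proof. by rewrite tmul_bal He2. Qed.

Lemma tens_e (N : rmod R) (HN : is_rmod N) t : t = tmul (@ract R N) bl (mu N t) e.
Proof.
move: t; apply: (tens_ext (al := id) (be := fun t => tmul (@ract R N) bl (mu N t) e)).
- by [].
- by move=> x y; rewrite mu_add // tmulDl.
by move=> m n /=; rewrite mu_tmul // tmul_c.
Qed.

Lemma Dee : D e = tmul br bl e e.
Proof.
have h : mu RC (D e) = e := cR e.
by rewrite {1}(tens_e HRC (D e)) h.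
Qed.

Lemma comod_e (M : comod C) : is_comod M -> forall m, coact m = tmul (@ract R M) bl m e.
Proof.
case=> HM _ _ cu m; have h : mu M (coact m) = m := cu m.
by rewrite {1}(tens_e HM (coact m)) h.
Qed.

Lemma S_F_nat_full : F_naturally_full C.
Proof.
exists (fun M M' g => g); split; last by [].
move=> M M' HM HM' g Hg; split=> //; split=> // m.
by rewrite (comod_e HM') (comod_e HM) tfun_tmul //; exact: lcompat_id.
Qed.

Lemma S_G_nat_full : G_naturally_full C.
Proof.
exists (fun N N' g n => mu N' (g (tmul (@ract R N) bl n e))); split.
  move=> N N' HN HN' g [[gA gR] gC].
  set Pg := fun n => _.
  have HP : rlin Pg.
    split.
      by move=> x y; rewrite /Pg tmulDl gA mu_add.
    move=> n r; rewrite /Pg tmul_bal Hc.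
    have -> : tmul (@ract R N) bl n (br e r) = ract (r := tensRB N C) (tmul (@ract R N) bl n e) r.
      by rewrite /= tfun_tmul //; exact: bract_lcompat HB r.
    by rewrite gR; case: (mu_rlin HN') => _ ->.
  split=> //.
  apply: (tens_ext (al := Gmor Pg) (be := g)); first exact: tfun_add HP (lcompat_id _).
    exact: gA.
  move=> n c; rewrite /Gmor (tfun_tmul HP (lcompat_id _)).
  rewrite tmul_c (tmul_c n c); case: HP => _ <-.
  by rewrite {1}(tens_e HN' (g _)).
move=> N0 N N' N'0 H0 HN HN' H'0 f h g Hf Hh Hg n /=.
rewrite /Gmor (tfun_tmul Hf (lcompat_id _)).
by rewrite (mu_nat HN' H'0 Hh).
Qed.

Lemma S_fgp : (rfin_gen RC /\ rprojective RC) /\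
              (lfin_gen (lmod_of_bimod C) /\ lprojective (lmod_of_bimod C)).
Proof.
split; split.
- exists 1%N, (fun _ => e) => m; exists (fun _ => eps m).
  by rewrite big_ord1 /= He1.
- move=> A B HA HB p Hp sur g Hg; have [a Ha] := sur (g e).
  case: HA => a1 a2 a3 a4.
  exists (fun c => ract a (eps c)); split.
    split; first by move=> x y; rewrite eA a2.
    by move=> c r /=; rewrite er a3.
  by move=> c; case: Hp => _ ->; rewrite Ha; case: Hg => _ <-; rewrite /= He1.
- exists 1%N, (fun _ => e) => m; exists (fun _ => eps m).
  by rewrite big_ord1 /= He2.
- move=> A B HA HB p Hp sur g Hg; have [a Ha] := sur (g e).
  case: HA => a1 a2 a3 a4.
  exists (fun c => lact (eps c) a); split.
    split; first by move=> x y; rewrite eA a2.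
    by move=> r c /=; rewrite el a3.
  by move=> c; case: Hp => _ ->; rewrite Ha; case: Hg => _ <-; rewrite /= He2.
Qed.

Lemma tmul_e_r (N : rmod R) (m : N) r :
  tmul (@ract R N) bl (ract m r) e = ract (r := tensRB N C) (tmul (@ract R N) bl m e) r.
Proof.
rewrite /= tfun_tmul //; last exact: bract_lcompat HB r.
by rewrite tmul_bal Hc.
Qed.


Lemma cf c : br c (eps e) = c.
Proof. by rewrite -{1}(He2 c) blr He1 He2. Qed.

Lemma tens_f (N : rmod R) (t : tensRB N C) : ract t (eps e) = t.
Proof.
move: t; apply: (tens_ext (al := fun t => ract (r := tensRB N C) t (eps e)) (be := id)).
- exact: tfun_add (rcompat_id _) (bract_lcompat HB _).
- by [].
move=> m n /=; rewrite tfun_tmul //; last exact: bract_lcompat HB _.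
by rewrite cf.
Qed.

Definition Hobj (N : rmod R) : comod C :=
  @CoMod R C (tensRB N C) (fun t => tmul (@ract R (tensRB N C)) bl t e).
Definition Hmor (N N' : rmod R) (f : N -> N') : Hobj N -> Hobj N' :=
  tfun (@ract R N) bl (@ract R N') bl f id.

Lemma Dlc : lcompat bl (@blact R (tensBB C C)) D.
Proof. split; [exact: DA | exact: Dl]. Qed.

Lemma coact_rlin (N : rmod R) :
  rlin (M := Hobj N) (N := tensRB (Hobj N) C) (@coact R C (Hobj N)).
Proof.
split; first by move=> x y; rewrite /= tmulDl.
by move=> t r; exact: (tmul_e_r (N := tensRB N C) t r).
Qed.

Lemma Hobj_comod (N : rmod R) : is_rmod N -> is_comod (Hobj N).
Proof.
move=> HN; split.
- exact: tensRB_rmod.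
- exact: coact_rlin.
- move=> t /=.
  rewrite (tfun_tmul (coact_rlin N) (lcompat_id _)).
  rewrite tassoc_tmul2; last exact: HB.
  by rewrite (tfun_tmul (rcompat_id _) Dlc) Dee.
move=> t /=; have h := mu_tmul (tensRB_rmod N) t e.
by rewrite /mu in h; rewrite h tens_f.
Qed.

Lemma Hmor_hom (N N' : rmod R) (f : N -> N') : rlin f -> comod_hom (Hmor f).
Proof.
move=> Hf; have Hr := tfun_rlin Hf; split=> //.
by move=> t /=; rewrite (tfun_tmul Hr (lcompat_id _)).
Qed.

Lemma eta_rlin (N : rmod R) : rlin (M := N) (N := Hobj N) (fun m => tmul (@ract R N) bl m e).
Proof.
split; first by move=> x y; rewrite tmulDl.
by move=> m r; rewrite tmul_e_r.
Qed.

Lemma S_Frobenius : F_Frobenius C.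
Proof.
exists Hobj, Hmor; split; [|split].
- split.
  + exact: Hobj_comod.
  + by move=> N N' f _ _; exact: Hmor_hom.
  + by move=> N _ t; rewrite /Hmor tfun_id.
  + move=> N1 N2 N3 f g _ _ _ Hf Hg t /=.
    by rewrite /Hmor tfun_comp //; exact: lcompat_id.
- exists (fun M m => tmul (@ract R M) bl m e), (fun N => mu N); split.
  + move=> M HM; split; first exact: eta_rlin.
    move=> m /=; rewrite (comod_e HM) (tfun_tmul (eta_rlin M) (lcompat_id _)) //.
  + by move=> N HN; exact: mu_rlin.
  + move=> M M' f _ _ [Hf _] m /=.
    by rewrite /Hmor (tfun_tmul Hf (lcompat_id _)).
  + by move=> N N' g HN HN' Hg t /=; rewrite (mu_nat HN HN' Hg).
  split.
  + move=> M HM m /=; case: (HM) => _ _ _ cu.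
    have h : mu M (coact m) = m := cu m.
    by rewrite (comod_e HM) in h.
  + move=> N HN t /=.
    rewrite /Hmor (tfun_tmul (mu_rlin HN) (lcompat_id _)).
    by rewrite -tens_e.
- exists (fun N n => tmul (@ract R N) bl n e), (fun M => mu M); split.
  + by move=> N HN; exact: eta_rlin.
  + move=> M HM; case: (HM) => HM0 _ _ _; split; first exact: mu_rlin.
    move=> t /=; rewrite (comod_e HM).
    by rewrite (tfun_tmul (mu_rlin HM0) (lcompat_id _)).
  + move=> N N' g _ _ Hg n /=.
    by rewrite /Hmor (tfun_tmul Hg (lcompat_id _)).
  + move=> M M' f HM HM' [Hf _] t /=; case: HM => HM0 _ _ _; case: HM' => HM1 _ _ _.
    by rewrite (mu_nat HM0 HM1 Hf).
  split.
  + move=> N HN t /=.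
    have HT := tensRB_rmod N.
    move: t; apply: (@tens_ext R N (@ract R N) C bl _ (fun t => mu (tensRB N C) (@Hmor N (tensRB N C) (fun n => tmul (@ract R N) bl n e) t)) id).
    * apply: comp_add; first exact: (mu_add HT).
      exact: tfun_add (eta_rlin N) (lcompat_id _).
    * by [].
    move=> m c /=; rewrite /Hmor (tfun_tmul (eta_rlin N) (lcompat_id _)).
    have h := mu_tmul HT (tmul (@ract R N) bl m e) c.
    rewrite /mu in h; rewrite /mu h /= tfun_tmul //; last exact: bract_lcompat HB _.
    by rewrite He1.
  + move=> M HM m /=; case: (HM) => _ _ _ cu.
    have h : mu M (coact m) = m := cu m.
    by rewrite (comod_e HM) in h.
Qed.
End Struct.
End Coring.



Section Main.
Variables (R : pzRingType) (C : coring R).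
Hypothesis HC : is_coring C.
Local Notation eps := (@ceps R C).
Local Notation D := (@cDelta R C).
Local Notation bl := (@blact R C).
Local Notation br := (@bract R C).
Local Notation RC := (rmod_of_bimod C).

Definition Cc : comod C := @CoMod R C RC D.

Lemma Cc_comod : is_comod Cc.
Proof.
split.
- exact: HRC.
- split; [exact: DA | exact: Dr].
- by case: HC.
exact: cR.
Qed.

Lemma muL_good : good br bl (fun x y => bl (eps x) y).
Proof.
split=> *.
- by rewrite (eA HC) (blDl HC).
- by rewrite (blDr HC).
by rewrite (er HC) (blM HC).
Qed.

Lemma fromF : F_naturally_full C -> forall z : C, eps z = 1 ->
  (forall c, br z (eps c) = c) /\ (forall r, bl r z = br z r).
Proof.
move=> [P [HP _]] z Hz.
set phi := fun c : C => br z (eps c).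
have Hphi : rlin (M := RC) (N := RC) phi.
  split; first by move=> x y; rewrite /phi (eA HC) (brDr HC).
  by move=> c r; rewrite /phi /= (er HC) (brM HC).
have [Hh Heq] := HP Cc Cc Cc_comod Cc_comod phi Hphi.
have E : P Cc Cc phi = phi by apply: funext.
rewrite E in Hh; case: Hh => _ Hh.
have He1 : forall c, br z (eps c) = c.
  move=> c; have := Hh c; rewrite /= => h.
  have := congr1 (tlift (fun x y => bl (eps x) y)) h.
  rewrite (cL HC) tlift_tfun; last exact: muL_good.
  - rewrite (@tlift_eq _ _ _ _ _ _ _ (fun x y => bl (eps x) y)) ?(cL HC) //.
    by move=> x y; rewrite /phi (er HC) Hz mul1r.
  - exact: Hphi.
  exact: lcompat_id.
split=> // r.
by rewrite -{1}(He1 (bl r z)) (el HC) Hz mulr1.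
Qed.

Definition RR : rmod R := @RMod R R (fun x r => x * r).
Lemma HRR : is_rmod RR.
Proof. by split=> *; rewrite /= ?mulrDl ?mulrDr ?mulrA ?mulr1. Qed.

Definition mm : tens (@ract R RR) bl -> C := tlift (fun (r : R) c => bl r c).
Lemma mm_good : good (@ract R RR) bl (fun (r : R) c => bl r c).
Proof.
split=> *; first exact: (blDl HC); first exact: (blDr HC).
by rewrite (blM HC).
Qed.
Lemma mm_add : additive_map mm. Proof. exact: tlift_add mm_good. Qed.
Lemma mm_tmul r c : mm (tmul (@ract R RR) bl r c) = bl r c.
Proof. by rewrite /mm tlift_tmul //; exact: mm_good. Qed.

Definition gg : Gobj C RR -> Gobj C RC := fun t => D (mm t).

Lemma gg_rlin : rlin (M := Gobj C RR) (N := Gobj C RC) gg.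
Proof.
split; first by move=> x y; rewrite /gg mm_add (DA HC).
move=> t r; rewrite /gg.
have -> : mm (ract t r) = br (mm t) r.
  move: t; apply: (tens_ext (al := fun t => mm (ract (r := Gobj C RR) t r))
                            (be := fun t => br (mm t) r)).
  - apply: comp_add; first exact: mm_add.
    exact: tfun_add (rcompat_id _) (bract_lcompat (HB HC) r).
  - by move=> x y; rewrite mm_add (brDl HC).
  move=> x c /=; rewrite tfun_tmul //; last exact: bract_lcompat (HB HC) r.
  by rewrite !mm_tmul (blr HC).
exact: (Dr HC).
Qed.

Lemma gg_hom : comod_hom gg.
Proof.
split; first exact: gg_rlin.
have HBC := HB HC.
have Dlc : lcompat bl (@blact R (tensBB C C)) D by split; [exact: DA | exact: Dl].
move=> t; move: t.
refine (@tens_ext R RR (@ract R RR) C bl _ (fun t => @coact R C (Gobj C RC) (gg t))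
                 (fun t => tfun (@ract R (Gobj C RR)) bl (@ract R (Gobj C RC)) bl gg id (@coact R C (Gobj C RR) t)) _ _ _).
- apply: comp_add; last by move=> x y; rewrite /gg mm_add (DA HC).
  apply: comp_add; first exact: tassoc_inv_add.
  exact: tfun_add (rcompat_id _) Dlc.
- apply: comp_add; first exact: tfun_add gg_rlin (lcompat_id _).
  apply: comp_add; first exact: tassoc_inv_add.
  exact: tfun_add (rcompat_id _) Dlc.
move=> r c.
have [_ _ _ coass _] := HC.
have E1 : @coact R C (Gobj C RC) (gg (tmul (@ract R RR) bl r c))
          = tfun br bl (@bract R (tensBB C C)) bl D id (D (bl r c)).
  rewrite /gg mm_tmul.
  change (tassoc_inv (tfun br bl br (@blact R (tensBB C C)) id D (D (bl r c)))
          = tfun br bl (@bract R (tensBB C C)) bl D id (D (bl r c))).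
  by rewrite -coass tassoc_invK.
rewrite E1.
change (tfun br bl (@bract R (tensBB C C)) bl D id (D (bl r c)) =
  tfun (@ract R (Gobj C RR)) bl (@ract R (Gobj C RC)) bl gg id
   (tassoc_inv (tfun (@ract R RR) bl (@ract R RR) (@blact R (tensBB C C)) id D
      (tmul (@ract R RR) bl r c)))).
rewrite (tfun_tmul (rcompat_id _) Dlc) tassoc_inv_tmul //.
rewrite tlift_comp_add; last exact: tfun_add gg_rlin (lcompat_id _).
rewrite (Dl HC).
change (tfun br bl (@bract R (tensBB C C)) bl D id
          (tfun br bl br bl (bl r) id (D c)) =
        tlift (fun y z => tfun (@ract R (Gobj C RR)) bl (@ract R (Gobj C RC)) bl gg id
          (@psiI R RR (@ract R RR) C C bl r y z)) (D c)).
rewrite tfun_comp; first last.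
- exact: lcompat_id.
- by split; [exact: DA | exact: Dr].
- exact: lcompat_id.
- exact: blact_rcompat.
rewrite {1}/tfun; apply: tlift_eq => y z.
have h := tfun_tmul gg_rlin (lcompat_id bl) (tmul (@ract R RR) bl r y) z.
rewrite /gg mm_tmul in h.
exact: (esym h).
Qed.

Lemma fromG : G_naturally_full C ->
  exists e : C, (forall c, br e (eps c) = c) /\ (forall r, bl r e = br e r).
Proof.
move=> [P [HP Hnat]].
have HRC' := HRC HC.
have [Hnu HG] := HP RR RC HRR HRC' gg gg_hom.
exists (P RR RC gg 1).
have He1 : forall c, br (P RR RC gg 1) (eps c) = c.
  move=> c; have h := HG (tmul (@ract R RR) bl 1 c).
  rewrite /Gmor (tfun_tmul Hnu (lcompat_id _)) /= /gg mm_tmul (bl1 HC) in h.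
  have := cR HC c; rewrite -h tlift_tmul //.
  exact: (mu_good HC HRC').
split=> // s.
set fs := fun x : R => s * x.
have Hfs : rlin (M := RR) (N := RR) fs.
  by split; [move=> x y; rewrite /fs mulrDr | move=> x r; rewrite /fs /= mulrA].
have Hid : rlin (M := RC) (N := RC) id by [].
have Hid' : rlin (M := RR) (N := RR) id by [].
set hs := bl s.
have Hhs : rlin (M := RC) (N := RC) hs.
  by split; [move=> x y; rewrite /hs (blDr HC) | move=> x r; rewrite /hs /= (blr HC)].
have N1 := Hnat RR RR RC RC HRR HRR HRC' HRC' fs id gg Hfs Hid gg_hom 1.
have N2 := Hnat RR RR RC RC HRR HRR HRC' HRC' id hs gg Hid' Hhs gg_hom 1.
have EQ : (@Gmor R C RC RC id \o gg) \o @Gmor R C RR RR fs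
          = (@Gmor R C RC RC hs \o gg) \o @Gmor R C RR RR id.
  apply: funext => t /=; rewrite /Gmor !tfun_id.
  move: t; apply: (@tens_ext R RR (@ract R RR) C bl _
     (fun t => gg (tfun (@ract R RR) bl (@ract R RR) bl fs id t))
     (fun t => tfun br bl br bl hs id (gg t))).
  - apply: comp_add; first by case: gg_rlin.
    exact: tfun_add Hfs (lcompat_id _).
  - apply: comp_add; first exact: tfun_add Hhs (lcompat_id _).
    by case: gg_rlin.
  move=> r c.
  rewrite (tfun_tmul Hfs (lcompat_id _)) /gg !mm_tmul.
  change (D (bl (s * r) c) = @blact R (tensBB C C) s (D (bl r c))).
  by rewrite -(Dl HC) (blM HC).
rewrite EQ in N1; rewrite N1 /= in N2.
rewrite -N2 /fs mulr1 -{1}[s]mul1r.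
by case: Hnu => _ /(_ 1 s) ->.
Qed.
End Main.

Unset Implicit Arguments.
Local Close Scope quotient_scope.
Local Open Scope ring_scope.

Theorem corollary3p15 (R : pzRingType) (C : coring R) :
  is_coring C ->
  (* 1. G naturally full implies (1), (2), (3) *)
  (G_naturally_full C ->
     [/\ F_naturally_full C,
         (rfin_gen (rmod_of_bimod C) /\ rprojective (rmod_of_bimod C)) /\
         (lfin_gen (lmod_of_bimod C) /\ lprojective (lmod_of_bimod C)) &
         F_Frobenius C]) /\
  (* 1.(1), converse *)
  (F_naturally_full C -> (exists z : C, ceps z = 1) -> G_naturally_full C) /\
  (* 2. *)
  (F_naturally_full C -> F_separable C).
Proof.
move=> HC; split; [|split].
- move=> HG; have [e [He1 Hc]] := fromG HC HG.
  split; [exact: (S_F_nat_full HC He1 Hc) | exact: (S_fgp HC He1 Hc)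
         | exact: (S_Frobenius HC He1 Hc)].
- move=> HF [z Hz]; have [He1 Hc] := fromF HC HF Hz.
  exact: (S_G_nat_full HC He1 Hc).
move=> [P [HP _]]; exists (fun M M' g => g); split; last by [].
move=> M M' HM HM'; split; last by [].
move=> g Hg; have [h1 h2] := HP M M' HM HM' g Hg.
have E : P M M' g = g := funext h2.
by rewrite -E.
Qed.
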